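(* Let $X$ be a compact metric space and $G$ a uniformly equicontinuous group of homeomorphisms of $X$ generated (as a group) by a finite set $G_1$. Then the pseudogroup $\mathcal G(G)$ generated by $G$ has no $(\mathcal G(G),G_1)$-expansive Borel probability measures.
   Context: $\mathrm{Homeo}(X)$: homeomorphisms $g:D_g\to R_g$ between open subsets of $X$, composed on natural domains $D_{h\circ g}=g^{-1}(D_h)$. The pseudogroup generated by $\Gamma\subset\mathrm{Homeo}(X)$ is the set of $g\in\mathrm{Homeo}(X)$ such that each $x\in D_g$ has a neighborhood $U_x\subset D_g$ with $g|_{U_x}=g_1^{e_1}\circ\cdots\circ g_k^{e_k}|_{U_x}$ for some $g_i\in\Gamma$, $e_i\in\{\pm1\}$. $G$ is uniformly equicontinuous if for every $\varepsilon>0$ there is $\delta>0$ with $d(x,y)<\delta\Rightarrow d(g(x),g(y))<\varepsilon$ for all $g\in G$, $x,y\in X$. With generating set $G_1$: $\mathcal G_n=\{g_1\circ\cdots\circ g_n:g_i\in G_1\}$, $\mathcal G_n^x=\{g\in\mathcal G_n:x\in D_g\}$, $\Phi_\delta(x)=\{y\in X: d(g(x),g(y))\le\delta\ \forall n\in\mathbb N,\ \forall g\in\mathcal G_n^x\cap\mathcal G_n^y\}$. A Borel probability measure $\mu$ is $(\mathcal G(G),G_1)$-expansive if there is $\delta>0$ with $\mu(\Phi_\delta(x))=0$ for every $x\in X$. *)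

(* Defs.v *)
From HB Require Import structures.
From mathcomp Require Import all_boot all_order all_algebra.
From mathcomp Require Import all_classical all_reals all_analysis.
Set Implicit Arguments. Unset Strict Implicit. Unset Printing Implicit Defensive.
Import Order.TTheory GRing.Theory Num.Theory.
Local Open Scope classical_set_scope.
Local Open Scope ring_scope.

(* Metric spaces equipped with a base point (needed by the measure library,
   whose measurable types are pointed; harmless: a space carrying a
   probability measure is nonempty). *)
#[short(type="pointedMetricType")]
HB.structure Definition PointedMetric (K : numDomainType) :=
  { M of Metric K M & Pointed M }.

Record homeo (X : topologicalType) := Homeo {
  hfun : X -> X ;
  hinv : X -> X ;
  hfunK : cancel hfun hinv ;
  hinvK : cancel hinv hfun ;
  hfun_cont : continuous hfun ;
  hinv_cont : continuous hinv }.

Inductive gen_group (X : topologicalType) (I : Type) (gens : I -> homeo X)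
  : (X -> X) -> Prop :=
| gen_id : gen_group gens id
| gen_gen i : gen_group gens (hfun (gens i))
| gen_inv i : gen_group gens (hinv (gens i))
| gen_comp f g : gen_group gens f -> gen_group gens g -> gen_group gens (f \o g).

Definition unif_equicontinuous (R : realType) (X : pointedMetricType R)
  (G : (X -> X) -> Prop) :=
  forall eps : R, 0 < eps -> exists2 delta : R, 0 < delta &
    forall g, G g -> forall x y : X, mdist x y < delta -> mdist (g x) (g y) < eps.

Definition word_map (X : topologicalType) (I : Type) (gens : I -> homeo X)
  (w : seq I) : X -> X :=
  foldr (fun i f => hfun (gens i) \o f) id w.

Definition Gn (X : topologicalType) (I : Type) (gens : I -> homeo X) (n : nat)
  : (X -> X) -> Prop :=
  fun g => exists w : seq I, size w = n /\ g = word_map gens w.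

(* Phi_delta(x); here every generator is a global homeomorphism, so all domains
   are X and \mathcal G_n^x = \mathcal G_n. *)
Definition Phi (R : realType) (X : pointedMetricType R) (I : Type) (gens : I -> homeo X)
  (delta : R) (x : X) : set X :=
  [set y | forall n : nat, (0 < n)%N -> forall g, Gn gens n g ->
             mdist (g x) (g y) <= delta].

Notation borel X := (g_sigma_algebraType (@open X)).

Definition expansive_measure (R : realType) (X : pointedMetricType R) (I : Type)
  (gens : I -> homeo X) (mu : probability (borel X) R) :=
  exists2 delta : R, 0 < delta & forall x : X, mu (Phi gens delta x) = 0%E.

(* Main.v *)
Require Import Defs.
From HB Require Import structures.
From mathcomp Require Import all_boot all_order all_algebra.
From mathcomp Require Import all_classical all_reals all_analysis.
Import Order.TTheory GRing.Theory Num.Theory.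
Local Open Scope classical_set_scope.
Local Open Scope ring_scope.

Lemma word_map_gen (X : topologicalType) (I : Type) (gens : I -> homeo X) (w : seq I) :
  gen_group gens (word_map gens w).
Proof.
elim: w => [|i w IH]; first exact: gen_id.
exact: (gen_comp (gen_gen gens i) IH).
Qed.

Lemma Phi_closed (R : realType) (X : pointedMetricType R) (I : Type)
  (gens : I -> homeo X) (delta : R) (x : X) :
  unif_equicontinuous (gen_group gens) -> closed (Phi gens delta x).
Proof.
move=> ue y cly n n0 g [w [sw ->]].
apply/ler_addgt0Pr => e e0.
have [d d0 hd] := ue e e0.
have [z [Pz yz]] := cly (ball y d) (nbhsx_ballx y d d0).
move: yz; rewrite ballEmdist /= => yz.
have h1 := hd _ (@word_map_gen _ _ gens w) y z yz.
have h2 := Pz n n0 _ (ex_intro _ w (conj sw erefl)).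
apply: (le_trans (metric_triangle _ (word_map gens w z) _)).
by rewrite lerD // (metric_sym (word_map gens w z)) ltW.
Qed.

Lemma mball_open (R : realType) (X : pointedMetricType R) (x : X) (r : R) :
  open (ball x r).
Proof.
rewrite openE => y; rewrite /interior ballEmdist /= => xy.
have hr : 0 < r - mdist x y by rewrite subr_gt0.
apply: (filterS _ (nbhsx_ballx y _ hr)).
move=> z; rewrite !ballEmdist /= => yz.
apply: (le_lt_trans (metric_triangle x y z)).
by move: yz; rewrite ltrBrDl addrC.
Qed.

Theorem mainTheorem17 (R : realType) (X : pointedMetricType R) (I : finType)
  (gens : I -> homeo X) :
  compact [set: X] ->
  unif_equicontinuous (gen_group gens) ->
  forall mu : probability (borel X) R, ~ expansive_measure gens mu.
Proof.
move=> cpt ue mu [delta delta0 hPhi].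
have [d d0 hd] := ue delta delta0.
have mball : forall x : X, measurable (ball x d : set (borel X)).
  move=> x; apply: sub_sigma_algebra; exact: mball_open.
have mPhi : forall x : X, measurable (Phi gens delta x : set (borel X)).
  move=> x; rewrite -[Phi _ _ _]setCK; apply: measurableC.
  apply: sub_sigma_algebra; rewrite /=.
  by apply: closed_openC; exact: Phi_closed.
have ball0 : forall x : X, mu (ball x d) = 0%E.
  move=> x; apply/eqP; rewrite eq_le measure_ge0 andbT -(hPhi x).
  apply: le_measure; rewrite ?inE //.
  move=> y; rewrite ballEmdist /= => xy n n0 g [w [_ ->]].
  exact/ltW/hd/xy/(@word_map_gen _ _ gens w).
have ind : forall s : seq X,
    measurable ([set y | exists i, i \in s /\ ball i d y] : set (borel X)) /\
    mu [set y | exists i, i \in s /\ ball i d y] = 0%E.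
  elim=> [|a s [ms IH]].
    have -> : [set y : X | exists i, i \in [::] /\ ball i d y] = set0.
      by apply/seteqP; split => y // [i []].
    by split; [exact: measurable0 | exact: measure0].
  have -> : [set y : X | exists i, i \in a :: s /\ ball i d y] =
            ball a d `|` [set y | exists i, i \in s /\ ball i d y].
    apply/seteqP; split => y.
      move=> [i []]; rewrite inE => /orP [/eqP -> |iS] bi; first by left.
      by right; exists i.
    case=> [ba|[i [iS bi]]]; first by exists a; rewrite inE eqxx.
    by exists i; rewrite inE iS orbT.
  split; first exact: measurableU.
  apply/eqP; rewrite eq_le measure_ge0 andbT.
  apply: (le_trans (measureU2 _ _ _)) => //.
  rewrite le_eqVlt; apply/orP; left; apply/eqP.
  exact: (etrans (f_equal2 (fun u v => (u + v)%E) (ball0 a) IH) (adde0 0%E)).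
move: cpt; rewrite compact_cover => /(_ X setT (fun x => ball x d)).
case.
- by move=> i _; exact: mball_open.
- by move=> y _; exists y => //; exact: ballxx.
move=> D' _ cov.
have [ms m0] := ind (finmap.enum_fset D').
have h1 := @probability_setT _ _ _ mu.
have h0 : mu setT = 0%E.
  apply/eqP; rewrite eq_le measure_ge0 andbT -m0.
  apply: le_measure; rewrite ?inE //.
  move=> y /cov [i Di bi]; exists i; split => //.
move: h1; rewrite h0 => /eqP; rewrite eqe eq_sym oner_eq0.
by [].
Qed.
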